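(* Let $c\in[\frac12,1)$ and let $d,\delta$ be positive integers with $d\ge\delta+3$. Let $G$ be a connected paw-friendly graph with maximum degree $\delta$ and $w:V(G)\to[0,1]$ a weight function with $w(V(G))=1$, and assume $G$ has no $d$-bounded $(w,c)$-balanced separator. Fix a bijection $\mathcal{O}:V(G)\to\{1,\dots,|V(G)|\}$, let $X$ be the set of minimal elements of $\le_A$, and let $\beta$ be the star-free bag of $G$. Then: (i) $\beta=X$ and $G[\beta]$ is bipartite; (ii) if $(X_1,X_2)$ is a bipartition of $G[\beta]$, then for $i=1,2$ the set $\mathcal{S}_i=\{S_x: x\in X_i\}$ is loosely laminar.
   Context: For $X\subseteq V(G)$, $w(X)=\sum_{x\in X}w(x)$; $N[v]$ is the closed neighborhood; $N^d[v]$ the set of vertices at distance at most $d$ from $v$. $X$ is $d$-bounded if $X\subseteq N^d[v]$ for some $v$; $X$ is a $(w,c)$-balanced separator if every component $D$ of $G\setminus X$ has $w(D)\le c$. A paw is the graph with vertices $v_1,\dots,v_4$ and edges $v_1v_2,v_2v_3,v_3v_4,v_2v_4$. For a graph $H$, $x\in V(H)$ breaks $Y\subseteq V(H)\setminus\{x\}$ (in $H$) if for every connected component $D$ of $H\setminus N_H[x]$, $Y\not\subseteq N_H[D]$ ($N_H[D]$ being $D$ plus its neighbors). $G$ is paw-friendly if $G$ is perfect and for every induced subgraph $H$ and every induced paw in $H$ with vertex set $\{c,a,b_1,b_2\}$ and edges $\{ab_1,ab_2,b_1b_2,ac\}$, either $a$ breaks $\{c,b_1,b_2\}$, or $b_1$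 breaks $\{c,b_2\}$, or $b_2$ breaks $\{c,b_1\}$ in $H$. For $v\in V(G)$, the canonical star separation $S_v=(A_v,C_v,B_v)$: $B_v$ is the largest-weight connected component of $G\setminus N[v]$ (unique under these assumptions), $C_v$ consists of $v$ and every neighbor of $v$ with a neighbor in $B_v$, $A_v=V(G)\setminus(B_v\cup C_v)$. $u,v$ are star twins if $B_u=B_v$, $C_u\setminus\{u\}=C_v\setminus\{v\}$, $A_u\setminus\{v\}=A_v\setminus\{u\}$. $x\le_A y$ iff $x=y$, or $x,y$ are star twins and $\mathcal{O}(x)<\mathcal{O}(y)$, or $x,y$ are not star twins and $y\in A_x$ (a partial order). The star-free bag is $\beta=\bigcap_{x\in X}(B_x\cup C_x)$. Separations $S,S'$ (triples $(A,C,B)$) are loosely non-crossing if $A(S)\cap C(S')=\emptyset=A(S')\cap C(S)$; a set of separations is loosely laminar if every two are loosely non-crossing. *)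

(* Defs.v *)
From HB Require Import structures.
From mathcomp Require Import all_boot all_order all_algebra.
From mathcomp Require Import reals.
Set Implicit Arguments. Unset Strict Implicit. Unset Printing Implicit Defensive.
Import Order.TTheory GRing.Theory Num.Theory.

Definition simple_graph (T : finType) (e : rel T) : Prop :=
  symmetric e /\ irreflexive e.

Section Graphs.
Variable T : finType.
Variable e : rel T.

Definition nbhd (v : T) : {set T} := [set u | e v u].
Definition cnbhd (v : T) : {set T} := v |: nbhd v.
Definition degree (v : T) : nat := #|nbhd v|.

Fixpoint ball (v : T) (k : nat) : {set T} :=
  if k is k'.+1 then
    ball v k' :|: [set u | [exists y in ball v k', e y u]]
  else [set v].

Definition connected_graph : Prop := forall x y : T, connect e x y.

Definition induced_rel (S : {set T}) : rel T :=
  [rel a b | [&& a \in S, b \in S & e a b]].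
Definition comp (S : {set T}) (x : T) : {set T} :=
  [set y in S | connect (induced_rel S) x y].

Definition nbhdH (S : {set T}) (x : T) : {set T} := x |: [set u in S | e x u].
Definition nbhdH_set (S : {set T}) (D : {set T}) : {set T} :=
  D :|: [set u in S | [exists y in D, e y u]].

Definition breaks (S : {set T}) (x : T) (Y : {set T}) : Prop :=
  forall z, z \in S :\: nbhdH S x ->
    ~~ (Y \subset nbhdH_set S (comp (S :\: nbhdH S x) z)).

Definition is_clique (K : {set T}) : bool :=
  [forall x in K, forall y in K, (x != y) ==> e x y].
Definition clique_number (S : {set T}) : nat :=
  \max_(K : {set T} | (K \subset S) && is_clique K) #|K|.
Definition colorable (S : {set T}) (k : nat) : Prop :=
  exists f : T -> nat, (forall x, x \in S -> f x < k) /\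
    (forall x y, x \in S -> y \in S -> e x y -> f x != f y).
Definition is_chromatic_number (S : {set T}) (k : nat) : Prop :=
  colorable S k /\ forall j, colorable S j -> k <= j.
Definition perfect : Prop :=
  forall S : {set T}, is_chromatic_number S (clique_number S).

Definition paw_friendly : Prop :=
  perfect /\
  forall (S : {set T}) (c a b1 b2 : T),
    c \in S -> a \in S -> b1 \in S -> b2 \in S ->
    uniq [:: c; a; b1; b2] ->
    e a b1 -> e a b2 -> e b1 b2 -> e a c -> ~~ e c b1 -> ~~ e c b2 ->
    breaks S a [set c; b1; b2] \/ breaks S b1 [set c; b2] \/
    breaks S b2 [set c; b1].

Definition is_bipartition (S X1 X2 : {set T}) : Prop :=
  X1 :|: X2 = S /\ X1 :&: X2 = set0 /\
  (forall x y, x \in X1 -> y \in X1 -> ~~ e x y) /\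
  (forall x y, x \in X2 -> y \in X2 -> ~~ e x y).
Definition bipartite (S : {set T}) : Prop :=
  exists X1 X2, is_bipartition S X1 X2.

Definition separation := ({set T} * {set T} * {set T})%type.
Definition sepA (s : separation) : {set T} := s.1.1.
Definition sepC (s : separation) : {set T} := s.1.2.
Definition sepB (s : separation) : {set T} := s.2.
Definition loosely_noncrossing (s s' : separation) : Prop :=
  sepA s :&: sepC s' = set0 /\ sepA s' :&: sepC s = set0.
Definition loosely_laminar (I : {set T}) (S : T -> separation) : Prop :=
  forall x y, x \in I -> y \in I -> loosely_noncrossing (S x) (S y).

Variable R : realType.
Variable w : T -> R.

Definition wt (X : {set T}) : R := (\sum_(x in X) w x)%R.

Definition bounded (d : nat) (X : {set T}) : Prop :=
  exists v, X \subset ball v d.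
Definition balanced_separator (c : R) (X : {set T}) : Prop :=
  forall z, z \notin X -> (wt (comp (~: X) z) <= c)%R.

(* B_v: the largest-weight component of G \ N[v] (written as the set of all
   vertices lying in a component of maximum weight; it is the unique such
   component under the paper's hypotheses). *)
Definition starB (v : T) : {set T} :=
  [set z | (z \notin cnbhd v) &&
     [forall y, (y \notin cnbhd v) ==>
        (wt (comp (~: cnbhd v) y) <= wt (comp (~: cnbhd v) z))%R]].
Definition starC (v : T) : {set T} :=
  v |: [set u in nbhd v | [exists y in starB v, e u y]].
Definition starA (v : T) : {set T} := ~: (starB v :|: starC v).
Definition star_sep (v : T) : separation := (starA v, starC v, starB v).

Definition star_twins (u v : T) : bool :=
  [&& starB u == starB v, starC u :\ u == starC v :\ v &
      starA u :\ v == starA v :\ u].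

Variable O : T -> nat.
Definition leA (x y : T) : bool :=
  [|| x == y, star_twins x y && (O x < O y) |
      ~~ star_twins x y && (y \in starA x)].
Definition minimalA : {set T} :=
  [set x | [forall y, leA y x ==> (y == x)]].
Definition star_free_bag : {set T} :=
  \bigcap_(x in minimalA) (starB x :|: starC x).

End Graphs.

(* Main.v *)
Require Import Defs.
From HB Require Import structures.
From mathcomp Require Import all_boot all_order all_algebra.
From mathcomp Require Import reals.
Set Implicit Arguments. Unset Strict Implicit. Unset Printing Implicit Defensive.
Import Order.TTheory GRing.Theory Num.Theory.

Section Comp.
Variable T : finType.
Variable e : rel T.
Hypothesis esym : symmetric e.
Implicit Types S D : {set T}.

Lemma induced_sym S : symmetric (induced_rel e S).
Proof. by move=> a b; rewrite /induced_rel /= esym; case: (a \in S); case: (b \in S). Qed.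

Lemma comp_sub S z : Defs.comp e S z \subset S.
Proof. by apply/subsetP=> y; rewrite inE => /andP[]. Qed.

Lemma comp_refl S z : z \in S -> z \in Defs.comp e S z.
Proof. by move=> zS; rewrite inE zS connect0. Qed.

Lemma comp_eq S z y : y \in Defs.comp e S z -> Defs.comp e S y = Defs.comp e S z.
Proof.
rewrite inE => /andP[yS czy]; apply/setP=> u; rewrite !inE.
case uS: (u \in S) => //=.
apply/idP/idP=> h.
  exact: connect_trans czy h.
rewrite (sym_connect_sym (induced_sym S)) in czy.
exact: connect_trans czy h.
Qed.

Lemma comp_closed S z y u : y \in Defs.comp e S z -> u \in S -> e y u -> u \in Defs.comp e S z.
Proof.
move=> yc uS eyu; move: (yc); rewrite inE => /andP[yS czy].
rewrite inE uS /=; apply: connect_trans czy (connect1 _).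
by rewrite /induced_rel /= yS uS eyu.
Qed.

Lemma comp_mono S S' z : S \subset S' -> Defs.comp e S z \subset Defs.comp e S' z.
Proof.
move=> sub; apply/subsetP=> y; rewrite !inE => /andP[yS czy].
rewrite (subsetP sub _ yS) /=.
apply: (connect_sub _ czy) => a b /= /and3P[aS bS eab].
by apply: connect1; rewrite /induced_rel /= (subsetP sub _ aS) (subsetP sub _ bS).
Qed.

Lemma comp_inner S z y : y \in Defs.comp e S z -> y \in Defs.comp e (Defs.comp e S z) z.
Proof.
move=> yc; move: (yc); rewrite inE => /andP[yS /connectP[p pth yE]].
have zS : z \in S.
  case: p pth yE => [|b p] /=; first by move=> _ <-.
  by case/andP=> /and3P[].
have zc := comp_refl zS.
rewrite inE yc /= yE.
have gen : forall a, a \in Defs.comp e S z ->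
   connect (induced_rel e (Defs.comp e S z)) z a ->
   path (induced_rel e S) a p ->
   connect (induced_rel e (Defs.comp e S z)) z (last a p).
  elim: p {pth yE yc} => [|b p IH] a //=.
  move=> ac cza /andP[/and3P[aS bS eab] pth].
  have bc : b \in Defs.comp e S z by exact: comp_closed ac bS eab.
  apply: IH => //.
  by apply: connect_trans cza (connect1 _); rewrite /induced_rel /= ac bc eab.
exact: gen.
Qed.

Lemma comp_sub_conn S S' z : Defs.comp e S z \subset S' -> Defs.comp e S z \subset Defs.comp e S' z.
Proof.
move=> sub; apply/subsetP=> y yc.
exact: (subsetP (comp_mono z sub)) _ (comp_inner yc).
Qed.

Lemma comp_disj S y z : Defs.comp e S y = Defs.comp e S z \/ [disjoint Defs.comp e S y & Defs.comp e S z].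
Proof.
case: (boolP [disjoint Defs.comp e S y & Defs.comp e S z]) => [|/pred0Pn [u /andP[u1 u2]]]; first by right.
by left; rewrite -(comp_eq u1) (comp_eq u2).
Qed.

Lemma exit_edge (D : {set T}) a b : a \in D -> b \notin D -> connect e a b ->
  exists u p, [/\ u \in D, p \notin D & e u p].
Proof.
move=> aD bD /connectP[p pth bE].
elim: p a pth aD bE => [|q p IH] a /=; first by move=> _ aD bE; rewrite bE aD in bD.
case/andP=> eaq pth aD bE.
case: (boolP (q \in D)) => qD; first exact: IH qD bE.
by exists a, q.
Qed.
End Comp.

From mathcomp Require Import lra zify.
Section Weights.
Variable T : finType.
Variable R : realType.
Variable w : T -> R.
Hypothesis w0 : forall x, (0 <= w x)%R.
Hypothesis w1 : wt w [set: T] = 1%R.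
Variable c : R.
Hypothesis hc : (2%:R^-1 <= c)%R.
Implicit Types A B : {set T}.

Lemma wt_ge0 A : (0 <= wt w A)%R.
Proof. by apply: sumr_ge0 => i _; exact: w0. Qed.

Lemma wt_mono A B : A \subset B -> (wt w A <= wt w B)%R.
Proof.
move=> sub; rewrite /wt [X in (_ <= X)%R](big_setID A) /= (setIidPr sub).
have := wt_ge0 (B :\: A); rewrite /wt => h; lra.
Qed.

Lemma wt_disj A B : [disjoint A & B] -> (wt w A + wt w B <= 1)%R.
Proof.
move=> dj; rewrite -w1.
have -> : (wt w A + wt w B = wt w (A :|: B))%R.
  rewrite /wt [X in _ = X](big_setID A) /= setUK.
  congr (_ + _)%R; apply: eq_bigl => x; rewrite !inE.
  case xA: (x \in A); case xB: (x \in B) => //=.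
  by move: dj; rewrite disjoint_subset => /subsetP /(_ x xA); rewrite inE xB.
by apply: wt_mono; exact: subsetT.
Qed.

Lemma big_meet A B : (c < wt w A)%R -> (c < wt w B)%R -> ~~ [disjoint A & B].
Proof.
move=> hA hB; apply/negP => dj; have := wt_disj dj.
have : (1 <= 2 * c)%R.
  have h2 : (0 < 2%:R :> R)%R by rewrite ltr0n.
  have := hc; rewrite -(ler_pM2l h2) mulrV ?unitf_gt0 //.
lra.
Qed.
End Weights.

Section Main.
Variable T : finType.
Variable e : rel T.
Hypothesis esym : symmetric e.
Hypothesis eirr : irreflexive e.
Variable R : realType.
Variable w : T -> R.
Hypothesis w0 : forall x, (0 <= w x)%R.
Hypothesis w1 : wt w [set: T] = 1%R.
Variable c : R.
Hypothesis hc : (2%:R^-1 <= c)%R.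
Variable d : nat.
Hypothesis hd : 3 <= d.
Hypothesis Hsep : forall X : {set T}, bounded e d X -> ~ balanced_separator e w c X.
Implicit Types S D X Y : {set T}.

Notation N := (cnbhd e).
Notation B := (starB e w).
Notation C := (starC e w).
Notation A := (starA e w).
Notation cmp := (Defs.comp e).

Lemma c_half : (1 <= 2 * c)%R.
Proof.
have h2 : (0 < 2%:R :> R)%R by rewrite ltr0n.
by have := hc; rewrite -(ler_pM2l h2) mulrV ?unitf_gt0.
Qed.

Lemma inN v u : (u \in N v) = (u == v) || e v u.
Proof. by rewrite /cnbhd /nbhd !inE. Qed.

Lemma ball_sub v k : ball e v k \subset ball e v k.+1.
Proof. by rewrite /=; apply: subsetUl. Qed.

Lemma ball_mono v k k' : k <= k' -> ball e v k \subset ball e v k'.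
Proof.
elim: k' => [|k' IH]; first by rewrite leqn0 => /eqP ->.
rewrite leq_eqVlt => /orP[/eqP -> //|]; rewrite ltnS => /IH h.
exact: subset_trans h (ball_sub v k').
Qed.

Lemma ball_step v k u t : u \in ball e v k -> e u t -> t \in ball e v k.+1.
Proof.
move=> uin eut; rewrite /= inE; apply/orP; right; rewrite inE.
by apply/existsP; exists u; rewrite uin eut.
Qed.

Lemma ball_N v k s : s \in ball e v k -> N s \subset ball e v k.+1.
Proof.
move=> sin; apply/subsetP=> t; rewrite inN => /orP[/eqP ->|est].
  exact: (subsetP (ball_sub v k)).
exact: ball_step sin est.
Qed.

Lemma ball0 v : v \in ball e v 0.
Proof. by rewrite /= inE. Qed.

Lemma sep_ex X v : X \subset ball e v d ->
  exists z, z \notin X /\ (c < wt w (cmp (~: X) z))%R.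
Proof.
move=> sub.
case: (boolP [exists z, (z \notin X) && (c < wt w (cmp (~: X) z))%R]).
  by case/existsP=> z /andP[h1 h2]; exists z.
move=> /existsPn H; exfalso; apply: (Hsep (X := X)); first by exists v.
move=> z zX; have := H z; rewrite zX /= => /negP h.
by rewrite leNgt; apply/negP.
Qed.

Lemma B_eq v z : z \notin N v -> (c < wt w (cmp (~: N v) z))%R ->
  B v = cmp (~: N v) z.
Proof.
move=> zN hz; apply/setP=> t; rewrite /starB inE.
apply/idP/idP.
  case/andP=> tN /forallP /(_ z); rewrite zN /= => le.
  have ht : (c < wt w (cmp (~: N v) t))%R by exact: lt_le_trans le.
  case: (comp_disj esym (~: N v) t z) => [<-|dj].
    by apply: comp_refl; rewrite inE.
  by move: (big_meet w0 w1 hc ht hz); rewrite dj.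
move=> tc; have tN : t \notin N v.
  by have := subsetP (comp_sub e (~: N v) z) t tc; rewrite inE.
rewrite tN /= (comp_eq esym tc); apply/forallP=> y; apply/implyP=> yN.
case: (comp_disj esym (~: N v) y z) => [->//|dj].
have := wt_disj w0 w1 dj; have := c_half; move: hz; lra.
Qed.

Lemma B_ex v : exists z, [/\ z \notin N v, B v = cmp (~: N v) z &
  (c < wt w (cmp (~: N v) z))%R].
Proof.
have sub : N v \subset ball e v d.
  apply: subset_trans (ball_N (ball0 v)) (ball_mono v _); exact: leq_trans hd.
have [z [zN hz]] := sep_ex sub.
by exists z; split=> //; apply: B_eq.
Qed.

Lemma B_wt v : (c < wt w (B v))%R.
Proof. by have [z [_ -> ->]] := B_ex v. Qed.

Lemma B_N v y : y \in B v -> y \notin N v.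
Proof. by rewrite /starB inE => /andP[]. Qed.

Lemma B_comp v u : u \in B v -> B v = cmp (~: N v) u.
Proof.
have [z [zN -> hz]] := B_ex v => uin.
by rewrite (comp_eq esym uin).
Qed.

Lemma B_closed v y u : y \in B v -> u \notin N v -> e y u -> u \in B v.
Proof.
move=> yB uN eyu; have E := B_comp yB; rewrite E in yB *.
by apply: comp_closed yB _ eyu; rewrite inE.
Qed.

Lemma B_big v D z : z \in D -> D \subset ~: N v -> (c < wt w (cmp D z))%R ->
   cmp D z \subset B v.
Proof.
move=> zD sub hw.
have sub2 := comp_mono e z sub.
have zN : z \notin N v by have := subsetP sub z zD; rewrite inE.
rewrite (B_eq zN) //.
exact: lt_le_trans hw (wt_mono w0 sub2).
Qed.

Lemma B_sub u v : B u \subset ~: N v -> B u \subset B v.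
Proof.
move=> sub.
have [z [zN Bz hz]] := B_ex u.
have zB : z \in B u by rewrite Bz; apply: comp_refl; rewrite inE.
have zN' : z \notin N v by have := subsetP sub z zB; rewrite inE.
rewrite Bz in sub *.
have s2 := comp_sub_conn sub.
rewrite (B_eq zN') //.
exact: lt_le_trans hz (wt_mono w0 s2).
Qed.

Definition adjB a b := [exists y in B a, e b y].

Lemma inC v u : (u \in C v) = (u == v) || (e v u && adjB v u).
Proof. by rewrite /starC /nbhd !inE. Qed.

Lemma inA v u : (u \in A v) = ~~ (u \in B v) && ~~ (u \in C v).
Proof. by rewrite /starA !inE negb_or. Qed.

Lemma B_nadj v y : y \in B v -> ~~ e v y /\ y != v.
Proof. by move/B_N; rewrite inN negb_or => /andP[]. Qed.

Lemma adjB_e v u : u \notin B v -> u != v -> adjB v u -> e v u.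
Proof.
move=> uB uv /existsP[y /andP[yB euy]].
case: (boolP (e v u)) => // nvu.
have uN : u \notin N v by rewrite inN negb_or uv.
have eyu : e y u by rewrite esym.
by have := B_closed yB uN eyu; rewrite (negbTE uB).
Qed.

Lemma A_char v u : u \in A v -> [/\ u != v, u \notin B v & ~~ adjB v u].
Proof.
rewrite inA inC negb_or => /andP[uB /andP[uv h]]; split => //.
apply/negP => ad; move: h; rewrite ad andbT.
by rewrite (adjB_e uB uv ad).
Qed.

Lemma A_intro v u : u != v -> u \notin B v -> ~~ adjB v u -> u \in A v.
Proof. by move=> uv uB ad; rewrite inA uB inC (negbTE uv) (negbTE ad) andbF. Qed.

Lemma A_B v u : u \in A v -> B v \subset B u.
Proof.
case/A_char=> uv uB ad; apply: B_sub; apply/subsetP=> y yB.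
rewrite inE inN negb_or; apply/andP; split.
  by apply/negP=> /eqP E; rewrite -E yB in uB.
apply/negP=> euy; move/negP: ad; apply.
by apply/existsP; exists y; rewrite yB euy.
Qed.

Lemma Cminus v : C v :\ v = [set t | (t \notin B v) && adjB v t].
Proof.
apply/setP=> t; rewrite in_setD1 inC [in RHS]inE.
case: (eqVneq t v) => [->|tv] /=.
  symmetry; apply/negP=> /andP[_ /existsP[y /andP[yB evy]]].
  by case: (B_nadj yB); rewrite evy.
apply/idP/idP.
  case/andP=> evt ->; rewrite andbT.
  by apply/negP=> /B_N; rewrite inN evt orbT.
case/andP=> tB ad; by rewrite ad (adjB_e tB tv ad).
Qed.

Lemma twins_sym u v : star_twins e w u v = star_twins e w v u.
Proof.
by apply/and3P/and3P=> -[/eqP h1 /eqP h2 /eqP h3]; split; apply/eqP; apply: Logic.eq_sym.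
Qed.

Lemma twins_A u v : star_twins e w u v -> u != v -> v \in A u.
Proof.
case/and3P=> /eqP BE /eqP CE _ uv.
rewrite inA BE; apply/andP; split.
  by apply/negP=> /B_N; rewrite inN eqxx.
apply/negP=> vC.
have : v \in C u :\ u by rewrite in_setD1 vC eq_sym uv.
by rewrite CE in_setD1 eqxx.
Qed.

Lemma Cpt v t : t != v -> (t \in C v) = (t \notin B v) && adjB v t.
Proof.
move=> tv; rewrite inC (negbTE tv) /=.
apply/idP/idP.
  case/andP=> evt ->; rewrite andbT.
  by apply/negP=> /B_N; rewrite inN evt orbT.
case/andP=> tB ad; by rewrite ad (adjB_e tB tv ad).
Qed.

Lemma C_self v : v \in C v.
Proof. by rewrite inC eqxx. Qed.

Lemma adjB_self v : ~~ adjB v v.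
Proof.
apply/negP=> /existsP[y /andP[yB evy]].
by case: (B_nadj yB); rewrite evy.
Qed.

Lemma twins_gen (Bu Bv Cu Cv : {set T}) u v : u != v -> Bu = Bv ->
  (forall t, t != u -> (t \in Cu) = (t \notin Bu) && [exists y in Bu, e t y]) ->
  (forall t, t != v -> (t \in Cv) = (t \notin Bv) && [exists y in Bv, e t y]) ->
  u \in Cu -> v \in Cv -> ~~ [exists y in Bu, e u y] -> ~~ [exists y in Bv, e v y] ->
  [&& Bu == Bv, Cu :\ u == Cv :\ v & (~: (Bu :|: Cu)) :\ v == (~: (Bv :|: Cv)) :\ u].
Proof.
move=> uv <- hu hv uC vC nu nv; rewrite eqxx /=.
apply/andP; split; apply/eqP/setP=> t; rewrite !inE.
  case: (eqVneq t u) => [->|tu].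
    by rewrite /= uv (hv u) ?(negbTE nu) ?andbF // eq_sym.
  case: (eqVneq t v) => [->|tv].
    by rewrite /= (hu v) ?(negbTE nv) ?andbF // eq_sym.
  by rewrite /= hu ?hv.
case: (eqVneq t v) => [->|tv].
  by rewrite vC orbT andbF.
case: (eqVneq t u) => [->|tu].
  by rewrite uC orbT andbF.
by rewrite /= hu ?hv.
Qed.

Lemma twins_B u v : u != v -> B u = B v -> star_twins e w u v.
Proof.
move=> uv BE; rewrite /star_twins /starA.
apply: twins_gen => //.
- by move=> t; exact: Cpt.
- by move=> t; exact: Cpt.
- exact: C_self.
- exact: C_self.
- exact: adjB_self.
- exact: adjB_self.
Qed.

Variable O : T -> nat.
Hypothesis Oinj : injective O.
Hypothesis Ole : forall x, O x <= #|T|.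

Definition mu x := #|B x| * #|T|.+1 + O x.
Notation X := (minimalA e w O).
Notation leA := (leA e w O).

Lemma leA_A t u : leA t u -> t != u -> u \in A t /\ mu t < mu u.
Proof.
rewrite /Defs.leA => /or3P[/eqP->|/andP[tw lt]|/andP[ntw uA]]; first by rewrite eqxx.
  move=> tu; split; first exact: twins_A.
  move: tw => /and3P[/eqP BE _ _].
  rewrite /mu BE; rewrite ltn_add2l; exact: lt.
move=> tu; split => //.
have sub := A_B uA.
have neq : B t != B u.
  by apply/negP=> /eqP BE; move/negP: ntw; apply; apply: twins_B.
have pr : B t \proper B u by rewrite properEneq neq sub.
have cl := proper_card pr.
have h1 := Ole t; have h2 := Ole u.
rewrite /mu.
move: cl h1 h2; move: #|B t| #|B u| (O t) (O u) #|T| => a b x y n.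
move=> ab xn yn.
have : a.+1 * n.+1 <= b * n.+1 by rewrite leq_mul2r ab orbT.
lia.
Qed.

Lemma inX x : (x \in X) = [forall y, leA y x ==> (y == x)].
Proof. by rewrite /minimalA inE. Qed.

Lemma twins_neqO u v : u != v -> star_twins e w u v -> leA u v || leA v u.
Proof.
move=> uv tw; rewrite /Defs.leA tw (twins_sym v u) tw /=.
case: (ltngtP (O u) (O v)) => [lt|gt|E].
- by rewrite orbT.
- by rewrite !orbT.
- by move: uv; rewrite (Oinj E) eqxx.
Qed.

Lemma XnotA x m : x \in X -> m \in X -> x \notin A m.
Proof.
move=> xX mX; case: (eqVneq x m) => [->|xm].
  by rewrite inA C_self andbF.
move: xX mX; rewrite !inX => /forallP/(_ m) hx /forallP/(_ x) hm.
case: (boolP (star_twins e w m x)) => tw.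
  have mx : m != x by rewrite eq_sym.
  case/orP: (twins_neqO mx tw) => h.
    by move: hx; rewrite h /= (negbTE mx).
  by move: hm; rewrite h /= (negbTE xm).
apply/negP=> xA; move: hx; rewrite /Defs.leA tw xA orbT /=.
by rewrite eq_sym (negbTE xm).
Qed.

Lemma adjX2 a s : a \in X -> s != a -> e a s -> adjB a s -> adjB s a.
Proof.
move=> aX sa eas ad.
have as' : a != s by rewrite eq_sym.
move: aX; rewrite inX => /forallP/(_ s) h.
have nl : ~~ leA s a by apply/negP=> l; move: h; rewrite l /= (negbTE sa).
case: (boolP (star_twins e w s a)) => tw.
  have := twins_A (etrans (twins_sym a s) tw) as'.
  by case/A_char=> _ _; rewrite ad.
have aA : a \notin A s.
  by apply/negP=> aA; move/negP: nl; apply; rewrite /Defs.leA (negbTE tw) aA !orbT.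
have aB : a \notin B s by apply/negP=> /B_nadj []; rewrite esym eas.
by move: aA; rewrite inA aB /= negbK (Cpt as') => /andP[].
Qed.

Lemma adjX a b : a \in X -> b \in X -> a != b -> e a b -> adjB a b.
Proof.
move=> aX bX ab eab.
have := XnotA bX aX.
have bB : b \notin B a by apply/negP=> /B_nadj []; rewrite eab.
have ba : b != a by rewrite eq_sym.
by rewrite inA bB /= negbK (Cpt ba) => /andP[].
Qed.

Lemma notX_ex t : t \notin X -> exists s, leA s t /\ s != t.
Proof.
rewrite inX => /forallPn[s]; rewrite negb_imply => /andP[h1 h2].
by exists s.
Qed.

Lemma descent v : v \notin X -> exists m, m \in X /\ v \in A m.
Proof.
move=> vX.
have [u [lu uv]] := notX_ex vX.
have vA := (leA_A lu uv).1.
have [m vAm minm] := @arg_minnP _ u (fun m => v \in A m) mu vA.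
exists m; split => //.
rewrite inX; apply/forallP=> t; apply/implyP=> ltm; apply/negPn/negP=> tm.
have [mA mut] := leA_A ltm tm.
case: (eqVneq t v) => [Etv|tv].
  have [s [ls sv]] := notX_ex vX.
  have [vAs mus] := leA_A ls sv.
  have := minm s vAs; move: mus mut; rewrite Etv; lia.
have vAt : v \in A t.
  case/A_char: vAm => vm vBm nad.
  apply: A_intro.
  - by rewrite eq_sym.
  - by apply/negP=> /(subsetP (A_B mA)); rewrite (negbTE vBm).
  apply/negP=> /existsP[y /andP[yB evy]]; move/negP: nad; apply.
  by apply/existsP; exists y; rewrite (subsetP (A_B mA) _ yB) evy.
by have := minm t vAt; lia.
Qed.

Lemma bag_eq : star_free_bag e w O = X.
Proof.
apply/setP=> v; apply/idP/idP.
  move=> vb; apply/negPn/negP=> vX.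
  have [m [mX vA]] := descent vX.
  move/bigcapP: vb => /(_ m mX).
  by move: vA; rewrite inA in_setU => /andP[/negbTE -> /negbTE ->].
move=> vX; apply/bigcapP=> m mX.
by have := XnotA vX mX; rewrite inA negb_and !negbK in_setU.
Qed.

Lemma LN x y : x \in X -> y \in X -> ~~ e x y -> A x :&: C y = set0.
Proof.
move=> xX yX nxy; apply/setP=> t; rewrite in_setI in_set0.
apply/negP=> /andP[tA tC].
case: (eqVneq x y) => [Exy|xy].
  by move: tA; rewrite inA Exy tC andbF.
have yB : y \in B x.
  have := XnotA yX xX; rewrite inA negb_and !negbK inC => /orP[//|].
  by rewrite eq_sym (negbTE xy) (negbTE nxy).
case/A_char: tA => tx tB nad.
move: tC; rewrite inC => /orP[/eqP Ety|/andP[eyt _]].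
  by move: tB; rewrite Ety yB.
move/negP: nad; apply; apply/existsP; exists y; rewrite yB /=.
by rewrite esym.
Qed.

Lemma laminar (X1 : {set T}) : X1 \subset X ->
  (forall x y, x \in X1 -> y \in X1 -> ~~ e x y) ->
  loosely_laminar X1 (star_sep e w).
Proof.
move=> sub ind x y xX yX; rewrite /loosely_noncrossing /sepA /sepC /star_sep /=.
split; apply: LN; rewrite ?(subsetP sub) //; exact: ind.
Qed.

Hypothesis Hpaw : paw_friendly e.
Hypothesis Hconn : connected_graph e.

Lemma nbhdH_T v : nbhdH e setT v = N v.
Proof. by apply/setP=> u; rewrite /nbhdH /cnbhd /nbhd !inE. Qed.

Lemma adjB_of x t u : u \in B x -> e t u -> adjB x t.
Proof. by move=> uB etu; apply/existsP; exists u; rewrite uB etu. Qed.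

Lemma notbreak x (Y : {set T}) u : u \in B x -> (forall t, t \in Y -> adjB x t) ->
  ~ breaks e setT x Y.
Proof.
move=> uB hY br.
have uN := B_N uB.
have uin : u \in setT :\: nbhdH e setT x by rewrite nbhdH_T in_setD uN in_setT.
apply: (negP (br u uin)).
rewrite nbhdH_T setTD -(B_comp uB).
rewrite /adjB in hY; move: (B x) hY => Bx hY.
apply/subsetP=> t tY; rewrite /nbhdH_set in_setU; apply/orP; right.
rewrite !inE /=; have /existsP[y /andP[yB ety]] := hY t tY.
by apply/existsP; exists y; rewrite yB esym ety.
Qed.

Lemma paw_contra a b1 b2 p u :
  a != b1 -> a != b2 -> b1 != b2 -> p != a -> p != b1 -> p != b2 ->
  e a b1 -> e a b2 -> e b1 b2 -> e a p -> ~~ e p b1 -> ~~ e p b2 ->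
  adjB a b1 -> adjB a b2 -> adjB b1 a -> adjB b1 b2 -> adjB b2 a -> adjB b2 b1 ->
  e p u -> u \in B a -> u \in B b1 -> u \in B b2 -> False.
Proof.
move=> ab1 ab2 b12 pa pb1 pb2 e1 e2 e3 e4 n1 n2 h1 h2 h3 h4 h5 h6 epu ua ub1 ub2.
case: Hpaw => _ H.
have un : uniq [:: p; a; b1; b2].
  by rewrite /= !inE !negb_or pa pb1 pb2 ab1 ab2 b12.
case: (H setT p a b1 b2 (in_setT _) (in_setT _) (in_setT _) (in_setT _) un
        e1 e2 e3 e4 n1 n2) => [br|[br|br]].
- apply: (notbreak ua _ br) => t; rewrite !inE -?orbA => /or3P[]/eqP->.
  + exact: adjB_of ua epu.
  + exact: h1.
  + exact: h2.
- apply: (notbreak ub1 _ br) => t; rewrite !inE => /orP[]/eqP->.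
  + exact: adjB_of ub1 epu.
  + exact: h4.
- apply: (notbreak ub2 _ br) => t; rewrite !inE => /orP[]/eqP->.
  + exact: adjB_of ub2 epu.
  + exact: h6.
Qed.

Lemma neq_e a b : e a b -> a != b.
Proof. by move=> eab; apply/negP=> /eqP E; move: eab; rewrite E eirr. Qed.

Lemma paw_X3 x y z p u : x \in X -> y \in X -> z \in X ->
  x != y -> x != z -> y != z -> e x y -> e x z -> e y z ->
  p != y -> p != z -> e x p -> ~~ e y p -> ~~ e z p ->
  e p u -> u \in B x -> u \in B y -> u \in B z -> False.
Proof.
move=> xX yX zX xy xz yz exy exz eyz py pz exp nyp nzp epu ux uy uz.
have yx : y != x by rewrite eq_sym.
have zx : z != x by rewrite eq_sym.
have zy : z != y by rewrite eq_sym.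
have eyx : e y x by rewrite esym.
have ezx : e z x by rewrite esym.
have ezy : e z y by rewrite esym.
apply: (@paw_contra x y z p u) => //.
- by rewrite eq_sym; apply: neq_e.
- by rewrite esym.
- by rewrite esym.
- exact: adjX.
- exact: adjX.
- exact: adjX.
- exact: adjX.
- exact: adjX.
- exact: adjX.
Qed.

Lemma paw_S s t1 t2 p u : t1 \in X -> t2 \in X -> t1 != t2 -> e t1 t2 ->
  s != t1 -> s != t2 -> e t1 s -> e t2 s -> adjB t1 s -> adjB t2 s ->
  p != t1 -> p != t2 -> e s p -> ~~ e t1 p -> ~~ e t2 p ->
  e p u -> u \in B s -> u \in B t1 -> u \in B t2 -> False.
Proof.
move=> t1X t2X t12 e12 st1 st2 e1s e2s a1 a2 pt1 pt2 esp n1 n2 epu us u1 u2.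
have t21 : t2 != t1 by rewrite eq_sym.
have e21 : e t2 t1 by rewrite esym.
apply: (@paw_contra s t1 t2 p u) => //.
- by rewrite eq_sym; apply: neq_e.
- by rewrite esym.
- by rewrite esym.
- by rewrite esym.
- by rewrite esym.
- exact: adjX2.
- exact: adjX2.
- exact: adjX.
- exact: adjX.
Qed.

Lemma triangle x y z : x \in X -> y \in X -> z \in X ->
  x != y -> x != z -> y != z -> e x y -> e x z -> e y z -> False.
Proof.
move=> xX yX zX xy xz yz exy exz eyz.
pose Tri := [set x; y; z].
have inTri t : (t \in Tri) = [|| t == x, t == y | t == z] by rewrite !inE -?orbA.
pose cnt v := (e x v : nat) + (e y v : nat) + (e z v : nat).
pose S := [set v | (v \in Tri) || ((1 < cnt v) && [forall t in Tri, e t v ==> adjB t v])].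
pose Y := \bigcup_(s in S) N s.
have TriS t : t \in Tri -> t \in S by move=> tT; rewrite inE tT.
have SY s t : s \in S -> t \in N s -> t \in Y by move=> sS tN; apply/bigcupP; exists s.
have ball2 s : s \in S -> s \in ball e x 2.
  have b1 : x \in ball e x 1 by apply: (subsetP (ball_sub x 0)); exact: ball0.
  have yb : y \in ball e x 1 by apply: ball_step (ball0 x) exy.
  have zb : z \in ball e x 1 by apply: ball_step (ball0 x) exz.
  rewrite inE inTri => /orP[/or3P[]/eqP->|/andP[cs _]].
  - exact: (subsetP (ball_sub x 1)).
  - exact: (subsetP (ball_sub x 1)).
  - exact: (subsetP (ball_sub x 1)).
  case exs: (e x s).
    by apply: (subsetP (ball_sub x 1)); apply: ball_step (ball0 x) exs.
  case eys: (e y s); first exact: ball_step yb eys.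
  by move: cs; rewrite /cnt exs eys; case: (e z s).
have Ysub : Y \subset ball e x d.
  apply/subsetP=> t /bigcupP[s sS tN].
  apply: (subsetP (ball_mono x hd)).
  exact: (subsetP (ball_N (ball2 s sS))).
have [z0 [z0Y hz0]] := sep_ex Ysub.
pose D := cmp (~: Y) z0.
have z0D : z0 \in D by apply: comp_refl; rewrite inE.
have DB s : s \in S -> D \subset B s.
  move=> sS; apply: B_big; first by rewrite inE.
    apply/subsetP=> t; rewrite !in_setC; apply: contra => tN; exact: SY sS tN.
  exact: hz0.
have DY t : t \in D -> t \notin Y.
  by move=> tD; have := subsetP (comp_sub e (~: Y) z0) t tD; rewrite inE.
have xD : x \notin D.
  apply/negP=> /DY; rewrite (SY x x) //; first by apply: TriS; rewrite inTri eqxx.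
  by rewrite inN eqxx.
have [u [p [uD pD eup]]] := exit_edge z0D xD (Hconn z0 x).
have pY : p \in Y.
  apply/negPn/negP=> pY; move/negP: pD; apply.
  by apply: comp_closed uD _ eup; rewrite inE.
have epu : e p u by rewrite esym.
have pS : p \notin S.
  apply/negP=> pS; have := DY u uD; rewrite (SY p u) // inN epu orbT.
  by [].
have [s sS pN] : exists2 s, s \in S & p \in N s by move/bigcupP: pY => [s sS pN]; exists s.
have sp : s != p by apply/negP => /eqP E; move: pS; rewrite -E sS.
have esp : e s p by move: pN; rewrite inN eq_sym (negbTE sp).
have uBs t : t \in S -> u \in B t by move=> tS; exact: (subsetP (DB t tS) u uD).
have xT : x \in Tri by rewrite inTri eqxx.
have yT : y \in Tri by rewrite inTri eqxx orbT.
have zT : z \in Tri by rewrite inTri eqxx !orbT.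
have ux := uBs x (TriS x xT).
have uy := uBs y (TriS y yT).
have uz := uBs z (TriS z zT).
have pT : p \notin Tri by apply/negP => /TriS; rewrite (negbTE pS).
have px : p != x by apply/negP=> /eqP E; move: pT; rewrite E xT.
have py : p != y by apply/negP=> /eqP E; move: pT; rewrite E yT.
have pz : p != z by apply/negP=> /eqP E; move: pT; rewrite E zT.
have fa : [forall t in Tri, e t p ==> adjB t p].
  apply/forallP => t; apply/implyP => tT; apply/implyP => etp.
  exact: adjB_of (uBs t (TriS t tT)) epu.
have cp : cnt p <= 1.
  by move: pS; rewrite inE (negbTE pT) fa andbT /= -leqNgt.
case exp: (e x p).
  have nyp : ~~ e y p by apply/negP => eyp; move: cp; rewrite /cnt exp eyp.
  have nzp : ~~ e z p.
    by apply/negP => ezp; move: cp; rewrite /cnt exp ezp addnC; case: (e y p).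
  exact: (paw_X3 xX yX zX xy xz yz exy exz eyz py pz exp nyp nzp epu ux uy uz).
case eyp: (e y p).
  have nzp : ~~ e z p by apply/negP => ezp; move: cp; rewrite /cnt eyp ezp; case: (e x p).
  have yx : y != x by rewrite eq_sym.
  have eyx : e y x by rewrite esym.
  exact: (paw_X3 yX xX zX yx yz xz eyx eyz exz px pz eyp (negbT exp) nzp epu uy ux uz).
case ezp: (e z p).
  have zx : z != x by rewrite eq_sym.
  have zy : z != y by rewrite eq_sym.
  have ezx : e z x by rewrite esym.
  have ezy : e z y by rewrite esym.
  exact: (paw_X3 zX xX yX zx zy xy ezx ezy exy px py ezp (negbT exp) (negbT eyp) epu uz ux uy).
have sT : s \notin Tri.
  rewrite inTri; apply/negP => /or3P[]/eqP E; move: esp; rewrite E.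
  - by rewrite exp.
  - by rewrite eyp.
  - by rewrite ezp.
have sx : s != x by apply/negP=> /eqP E; move: sT; rewrite E xT.
have sy : s != y by apply/negP=> /eqP E; move: sT; rewrite E yT.
have sz : s != z by apply/negP=> /eqP E; move: sT; rewrite E zT.
have us := uBs s sS.
move: sS; rewrite inE (negbTE sT) /= => /andP[cs /forallP fs].
have adj t : t \in Tri -> e t s -> adjB t s.
  by move=> tT ets; have := fs t; rewrite tT ets.
case exs: (e x s); case eys: (e y s).
- exact: (paw_S xX yX xy exy sx sy exs eys (adj x xT exs) (adj y yT eys) px py esp
    (negbT exp) (negbT eyp) epu us ux uy).
- have ezs : e z s by move: cs; rewrite /cnt exs eys; case: (e z s).
  exact: (paw_S xX zX xz exz sx sz exs ezs (adj x xT exs) (adj z zT ezs) px pz esp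
    (negbT exp) (negbT ezp) epu us ux uz).
- have ezs : e z s by move: cs; rewrite /cnt exs eys; case: (e z s).
  exact: (paw_S yX zX yz eyz sy sz eys ezs (adj y yT eys) (adj z zT ezs) py pz esp
    (negbT eyp) (negbT ezp) epu us uy uz).
- by move: cs; rewrite /cnt exs eys; case: (e z s).
Qed.

Lemma card3 (K : {set T}) : 2 < #|K| ->
  exists x y z, [/\ x \in K, y \in K, z \in K & [/\ x != y, x != z & y != z]].
Proof.
move=> h.
have /set0Pn[x xK] : K != set0 by apply/negP=> /eqP E; move: h; rewrite E cards0.
have h1 : 1 < #|K :\ x| by move: h; rewrite (cardsD1 x K) xK.
have /set0Pn[y yK] : K :\ x != set0 by apply/negP=> /eqP E; move: h1; rewrite E cards0.
have h2 : 0 < #|K :\ x :\ y| by move: h1; rewrite (cardsD1 y (K :\ x)) yK.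
have /set0Pn[z zK] : K :\ x :\ y != set0 by apply/negP=> /eqP E; move: h2; rewrite E cards0.
move: yK zK; rewrite !in_setD1 => /andP[yx yK] /andP[zy /andP[zx zK]].
by exists x, y, z; split => //; split => //; rewrite eq_sym.
Qed.

Lemma cliqueX : clique_number e X <= 2.
Proof.
apply/bigmax_leqP => K /andP[sub cl].
rewrite leqNgt; apply/negP => /card3 [x [y [z [xK yK zK [xy xz yz]]]]].
have hcl a b : a \in K -> b \in K -> a != b -> e a b.
  move=> aK bK ab; move/forallP: cl => /(_ a); rewrite aK /= => /forallP/(_ b).
  by rewrite bK ab.
exact: (triangle (subsetP sub _ xK) (subsetP sub _ yK) (subsetP sub _ zK) xy xz yz
   (hcl x y xK yK xy) (hcl x z xK zK xz) (hcl y z yK zK yz)).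
Qed.

Lemma bipX : bipartite e X.
Proof.
case: Hpaw => /(_ X) [[f [hf1 hf2]] _] _.
have hb : forall a, a \in X -> f a < 2.
  by move=> a aX; exact: leq_trans (hf1 a aX) cliqueX.
clear hf1; move: (minimalA e w O) hb hf2 => Xs hb hf2.
exists [set t in Xs | f t == 0], [set t in Xs | f t != 0].
split; [|split; [|split]].
- apply/setP=> t; rewrite !inE; by case: (t \in Xs); case: (f t == 0).
- apply/setP=> t; rewrite !inE; by case: (t \in Xs); case: (f t == 0).
- move=> a b; rewrite !inE => /andP[aX /eqP fa] /andP[bX /eqP fb].
  by apply/negP=> eab; have := hf2 a b aX bX eab; rewrite fa fb.
- move=> a b; rewrite !inE => /andP[aX fa] /andP[bX fb].
  have la := hb a aX; have lb := hb b bX.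
  apply/negP=> eab; have := hf2 a b aX bX eab.
  by move: la lb fa fb; case: (f a) => [|[|n]] //; case: (f b) => [|[|m]].
Qed.

Lemma main_result :
  (star_free_bag e w O = X /\ bipartite e (star_free_bag e w O)) /\
  (forall X1 X2 : {set T}, is_bipartition e (star_free_bag e w O) X1 X2 ->
     loosely_laminar X1 (star_sep e w) /\ loosely_laminar X2 (star_sep e w)).
Proof.
split; first by split; [exact: bag_eq | rewrite bag_eq; exact: bipX].
move=> X1 X2 [U [_ [i1 i2]]]; rewrite bag_eq in U.
split; apply: laminar.
- by rewrite -U subsetUl.
- exact: i1.
- by rewrite -U subsetUr.
- exact: i2.
Qed.
End Main.
Unset Implicit Arguments.

Theorem lemma6p1 (R : realType) (c : R) (d delta : nat)
  (T : finType) (e : rel T) (w : T -> R) (O : T -> nat) :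
  (2%:R^-1 <= c)%R -> (c < 1)%R ->
  0 < d -> 0 < delta -> delta + 3 <= d ->
  simple_graph e -> connected_graph e -> paw_friendly e ->
  (forall v, degree e v <= delta) -> (exists v, degree e v = delta) ->
  (forall x, 0 <= w x <= 1)%R -> wt w [set: T] = 1%R ->
  (forall X : {set T}, bounded e d X -> ~ balanced_separator e w c X) ->
  injective O -> (forall x, 1 <= O x <= #|T|) ->
  (forall k, 1 <= k <= #|T| -> exists x, O x = k) ->
  (star_free_bag e w O = minimalA e w O /\ bipartite e (star_free_bag e w O)) /\
  (forall X1 X2 : {set T}, is_bipartition e (star_free_bag e w O) X1 X2 ->
     loosely_laminar X1 (star_sep e w) /\ loosely_laminar X2 (star_sep e w)).
Proof.
move=> hc _ _ _ hdd [esym eirr] conn paw _ _ wb w1 Hsep Oinj Ob _.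
have w0 : forall x, (0 <= w x)%R by move=> x; case/andP: (wb x).
have hd : 3 <= d by apply: leq_trans hdd; rewrite leq_addl.
have Ole : forall x, O x <= #|T| by move=> x; case/andP: (Ob x).
exact: (main_result esym eirr w0 w1 hc hd Hsep Oinj Ole paw conn).
Qed.
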